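(* Let $k\ge2$, let $f:(k+1)^V\to\mathbb{R}_{\ge0}$ be non-negative and $k$-submodular with multilinear extension $F$, let $OPT=\max_{S\in(k+1)^V}f(S)$, and let $c>0$. Consider the meta-framework with step $\delta=1/N$, and suppose that at every iteration $t$ the direction $v(t)$ satisfies the following property, where $y=\nabla F(s(t))$ (i.e. $y_{i,j}=\frac{\partial F}{\partial x_{i,j}}(s(t))$): for every $a\in\mathbb{R}^{n\times k}$ with $a_{i,j}+a_{i,j'}\ge 0$ for all $i$ and all $j\neq j'$, and $a_{i,j}\le y_{i,j}$ for all $i,j$, and for every map $j^*:[n]\to[k]$, $$\sum_{i\in[n]}\sum_{j\in[k]}v_{i,j}(t)\big(a_{i,j^*(i)}-a_{i,j}\big)\ \le\ c\sum_{i\in[n]}\sum_{j\in[k]}v_{i,j}(t)\,y_{i,j}.$$ Then for every $\varepsilon>0$ there is $N_0$ (depending on $n,k,c,f,\varepsilon$) such that for all $N\ge N_0$, the output satisfies $s(N)\in\mathcal P$ and $F(s(N))\ge\frac{1}{c+1}OPT-\varepsilon$.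
   Context: Let $V=[n]=\{1,\dots,n\}$ and let $k\ge 1$ be an integer. Write $(k+1)^V$ for the set of $k$-tuples $S=(S_1,\dots,S_k)$ of pairwise disjoint subsets of $V$. For $S,T\in(k+1)^V$ let $S\sqcap T=(S_1\cap T_1,\dots,S_k\cap T_k)$ and let $S\sqcup T$ be the tuple whose $j$-th component is $(S_j\cup T_j)\setminus\bigcup_{l\neq j}(S_l\cup T_l)$. A function $f:(k+1)^V\to\mathbb{R}$ is $k$-submodular if $f(S)+f(T)\ge f(S\sqcap T)+f(S\sqcup T)$ for all $S,T\in(k+1)^V$. Let $\mathcal P=\{x\in[0,1]^{n\times k}:\sum_{j=1}^k x_{i,j}\le 1\ \forall i\in[n]\}$. The multilinear extension of $f$ is the polynomial $F(x)=\sum_{S\in(k+1)^V} f(S_1,\dots,S_k)\Big(\prod_{j\in[k]}\prod_{i\in S_j}x_{i,j}\Big)\prod_{i\in V\setminus\bigcup_j S_j}\Big(1-\sum_{j=1}^k x_{i,j}\Big)$, considered on $\mathcal P$. Meta-framework: fix a positive integer $N$ and $\delta=1/N$. Set $s(0)=0\in\mathbb{R}^{n\times k}$. For $t=0,1,\dots,N-1$, choose a direction $v(t)\in[0,1]^{n\times k}$ with $\sum_{j=1}^k v_{i,j}(t)=1$ for every $i\in[n]$ (the choice may depend on $s(t)$ and on $F$), and set $s(t+1)=s(t)+\delta\,v(t)$. The output is $s(N)$. *)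

(* Defs.v *)
From HB Require Import structures.
From mathcomp Require Import all_boot all_order all_algebra.
From mathcomp Require Import all_classical all_reals all_analysis.
Set Implicit Arguments. Unset Strict Implicit. Unset Printing Implicit Defensive.
Import Order.TTheory GRing.Theory Num.Theory.
Local Open Scope ring_scope.

Definition ktuple (n k : nat) := {ffun 'I_k -> {set 'I_n}}.

(* membership in (k+1)^V : components pairwise disjoint *)
Definition kdisj n k (S : ktuple n k) : bool :=
  [forall j : 'I_k, forall l : 'I_k, (j != l) ==> [disjoint S j & S l]].

Definition kmeet n k (S T : ktuple n k) : ktuple n k :=
  [ffun j => S j :&: T j].

Definition kjoin n k (S T : ktuple n k) : ktuple n k :=
  [ffun j => (S j :|: T j) :\: \bigcup_(l | l != j) (S l :|: T l)].

Definition k_submodular (R : realType) n k (f : ktuple n k -> R) : Prop :=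
  forall S T, kdisj S -> kdisj T ->
    f (kmeet S T) + f (kjoin S T) <= f S + f T.

(* OPT = max_{S in (k+1)^V} f S  (f is nonnegative, so 0 is a harmless seed) *)
Definition kOPT (R : realType) n k (f : ktuple n k -> R) : R :=
  \big[Num.max/0]_(S : ktuple n k | kdisj S) f S.

Definition multilinext (R : realType) n k (f : ktuple n k -> R)
    (x : 'M[R]_(n, k)) : R :=
  \sum_(S : ktuple n k | kdisj S)
    f S * (\prod_(j < k) \prod_(i in S j) x i j)
        * \prod_(i in ~: \bigcup_(j < k) S j) (1 - \sum_(j < k) x i j).

Definition inP (R : realType) n k (x : 'M[R]_(n, k)) : Prop :=
  (forall i j, 0 <= x i j <= 1) /\ (forall i, \sum_(j < k) x i j <= 1).

Definition partialF (R : realType) n k (F : 'M[R]_(n, k) -> R)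
    (x : 'M[R]_(n, k)) (i : 'I_n) (j : 'I_k) : R :=
  derive1 (fun t : R => F (x + t *: delta_mx i j)) 0.

Definition is_direction (R : realType) n k (v : 'M[R]_(n, k)) : Prop :=
  (forall i j, 0 <= v i j <= 1) /\ (forall i, \sum_(j < k) v i j = 1).

Definition good_direction (R : realType) n k (c : R)
    (y v : 'M[R]_(n, k)) : Prop :=
  forall a : 'M[R]_(n, k),
    (forall i (j j' : 'I_k), j != j' -> 0 <= a i j + a i j') ->
    (forall i j, a i j <= y i j) ->
    forall jstar : 'I_n -> 'I_k,
      \sum_(i < n) \sum_(j < k) v i j * (a i (jstar i) - a i j)
        <= c * \sum_(i < n) \sum_(j < k) v i j * y i j.

Definition traj (R : realType) n k (N : nat) (v : nat -> 'M[R]_(n, k))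
    (t : nat) : 'M[R]_(n, k) :=
  \sum_(u < t) (N%:R)^-1 *: v u.

(* Main.v *)
Require Import Defs.
From HB Require Import structures.
From mathcomp Require Import all_boot all_order all_algebra.
From mathcomp Require Import all_classical all_reals all_analysis.
From mathcomp Require Import ring lra.
Import Order.TTheory GRing.Theory Num.Theory.
Local Open Scope ring_scope.
Set Implicit Arguments. Unset Strict Implicit. Unset Printing Implicit Defensive.

Section RowAff.
Variables (R : realType) (n k : nat).
Notation M := 'M[R]_(n, k).

Definition setrow (z : M) (i : 'I_n) (u : 'I_k -> R) : M :=
  \matrix_(i', j) if i' == i then u j else z i' j.
Definition erow (j : 'I_k) : 'I_k -> R := fun l => (l == j)%:R.
Definition zrow : 'I_k -> R := fun _ => 0.
Definition DG (G : M -> R) i j (z : M) : R :=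
  G (setrow z i (erow j)) - G (setrow z i zrow).
Definition rowaff (G : M -> R) := forall z i u,
  G (setrow z i u) = G (setrow z i zrow) + \sum_j u j * DG G i j z.

Lemma setrowE z i u i' j : setrow z i u i' j = if i' == i then u j else z i' j.
Proof. by rewrite mxE. Qed.

Lemma setrow_id z i u w : setrow (setrow z i u) i w = setrow z i w.
Proof. by apply/matrixP=> a b; rewrite !mxE; case: eqP. Qed.

Lemma setrow_comm z i i' u w : i != i' ->
  setrow (setrow z i u) i' w = setrow (setrow z i' w) i u.
Proof.
move=> nii'; apply/matrixP=> a b; rewrite !mxE.
case: (eqVneq a i') => [Ha|]; case: (eqVneq a i) => [Hb|] //.
by move: nii'; rewrite -Ha -Hb eqxx.
Qed.

Lemma setrow_self z i : setrow z i (fun j => z i j) = z.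
Proof. by apply/matrixP=> a b; rewrite !mxE; case: eqP => // ->. Qed.

Lemma DG_setrow G i j z w : DG G i j (setrow z i w) = DG G i j z.
Proof. by rewrite /DG !setrow_id. Qed.

Lemma rowaff_val G z i : rowaff G ->
  G z = G (setrow z i zrow) + \sum_j z i j * DG G i j z.
Proof. by move=> HG; rewrite -{1}(setrow_self z i) HG. Qed.

Lemma rowaff_diff G z i u w : rowaff G ->
  G (setrow z i u) - G (setrow z i w) = \sum_j (u j - w j) * DG G i j z.
Proof.
move=> HG; rewrite (HG z i u) (HG z i w) opprD addrACA subrr add0r -sumrB; apply: eq_bigr => j _; by rewrite mulrBl.
Qed.

Lemma rowaff_D G r j : rowaff G -> rowaff (DG G r j).
Proof.
move=> HG z i u; case: (eqVneq i r) => [->|nir].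
  rewrite (DG_setrow G r j z u).
  rewrite !DG_setrow big1 ?addr0 // => l _.
  by rewrite [DG (DG _ _ _) _ _ _]/DG !DG_setrow subrr mulr0.
rewrite /DG !(setrow_comm _ _ _ nir).
rewrite (HG (setrow z r (erow j)) i u) (HG (setrow z r zrow) i u) /DG.
under [in RHS]eq_bigr => l _ do rewrite !(setrow_comm _ _ _ nir).
rewrite opprD addrACA -sumrB; congr (_ + _); apply: eq_bigr => l _.
rewrite -mulrBr; congr (_ * _).
ring.
Qed.

Lemma tele_ord (g : nat -> R) m : \sum_(r < m) (g r.+1 - g r) = g m - g 0%N.
Proof. by rewrite -(big_mkord xpredT (fun r => g r.+1 - g r)) telescope_sumr. Qed.

Definition mix (x x' : M) (r : nat) : M :=
  \matrix_(i, j) if (i < r)%N then x' i j else x i j.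

Lemma mix0 x x' : mix x x' 0 = x.
Proof. by apply/matrixP=> a b; rewrite !mxE. Qed.

Lemma mixn x x' : mix x x' n = x'.
Proof. by apply/matrixP=> a b; rewrite !mxE ltn_ord. Qed.

Lemma mixS x x' (r : 'I_n) :
  mix x x' r.+1 = setrow (mix x x' r) r (fun j => x' r j).
Proof.
apply/matrixP=> a b; rewrite !mxE ltnS leq_eqVlt.
case: (eqVneq a r) => [->|]; first by rewrite eqxx.
by move/negPf; rewrite -val_eqE /= => ->.
Qed.

Lemma mix_self x x' (r : 'I_n) :
  mix x x' r = setrow (mix x x' r) r (fun j => x r j).
Proof.
apply/matrixP=> a b; rewrite !mxE.
by case: (eqVneq a r) => [->|//]; rewrite ltnn.
Qed.

Lemma telescope G x x' : rowaff G ->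
  G x' - G x = \sum_(r < n) \sum_j (x' r j - x r j) * DG G r j (mix x x' r).
Proof.
move=> HG; rewrite -{1}(mixn x x') -{2}(mix0 x x').
rewrite -(tele_ord (fun r => G (mix x x' r))).
apply: eq_bigr => r _; rewrite mixS {2}(mix_self x x' r).
exact: rowaff_diff.
Qed.

Definition ptv (s : 'I_n -> option 'I_k) : M :=
  \matrix_(i, j) (s i == Some j)%:R.

Definition rowsP (x : M) := forall i, (forall j, 0 <= x i j) /\ \sum_j x i j <= 1.

Lemma rowsP_setrow x i u : rowsP x -> (forall j, 0 <= u j) -> \sum_j u j <= 1 ->
  rowsP (setrow x i u).
Proof.
move=> Hx Hu Hs i'; case: (eqVneq i' i) => [->|ne].
  by split; [move=> j|under eq_bigr do rewrite setrowE eqxx]; rewrite ?setrowE ?eqxx.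
by split; [move=> j|under eq_bigr do rewrite setrowE (negPf ne)];
   rewrite ?setrowE ?(negPf ne); case: (Hx i').
Qed.

Lemma sum_erow (j : 'I_k) : \sum_l erow j l = 1.
Proof.
rewrite (bigD1 j) //= big1 ?addr0 /erow ?eqxx // => l /negPf ->; done.
Qed.

Lemma erow_ge0 j l : 0 <= erow j l.
Proof. by rewrite /erow ler0n. Qed.

Lemma rowsP_erow x i j : rowsP x -> rowsP (setrow x i (erow j)).
Proof. by move=> Hx; apply: rowsP_setrow => //; rewrite ?sum_erow. Qed.

Lemma rowsP_zrow x i : rowsP x -> rowsP (setrow x i zrow).
Proof. by move=> Hx; apply: rowsP_setrow => //; rewrite /zrow big1. Qed.

Lemma rowaff_conv H x i : rowaff H ->
  H x = (1 - \sum_j x i j) * H (setrow x i zrow)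
        + \sum_j x i j * H (setrow x i (erow j)).
Proof.
move=> HH; rewrite (rowaff_val x i HH) /DG mulrBl mul1r mulr_suml -addrA; congr (_ + _).
rewrite addrC -sumrB; apply: eq_bigr => j _; by rewrite mulrBr.
Qed.

Lemma convex_ext H : rowaff H -> (forall s, 0 <= H (ptv s)) ->
  forall x, rowsP x -> 0 <= H x.
Proof.
move=> HH Hpt.
suff Q : forall m x s, rowsP x ->
   (forall i : 'I_n, (m <= i)%N -> forall j, x i j = (s i == Some j)%:R) -> 0 <= H x.
  move=> x Hx; apply: (Q n x (fun _ => None)) => // i; by rewrite leqNgt ltn_ord.
elim=> [|m IH] x s Hx Hxs.
  suff -> : x = ptv s by [].
  by apply/matrixP=> a b; rewrite mxE Hxs.
case: (ltnP m n) => [lmn|lnm]; last first.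
  apply: (IH x s Hx) => i; by rewrite leqNgt (leq_trans (ltn_ord i) lnm).
pose i0 := Ordinal lmn.
rewrite (rowaff_conv x i0 HH); apply: addr_ge0.
  apply: mulr_ge0; first by rewrite subr_ge0; case: (Hx i0).
  apply: (IH _ (fun i => if i == i0 then None else s i)); first exact: rowsP_zrow.
  move=> i mi j; rewrite setrowE; case: (eqVneq i i0) => // ne.
  apply: Hxs; rewrite ltn_neqAle mi andbT; apply: contra ne => /eqP e.
  by apply/eqP; apply: val_inj; rewrite /= e.
apply: sumr_ge0 => j _; apply: mulr_ge0; first by case: (Hx i0).
apply: (IH _ (fun i => if i == i0 then Some j else s i)); first exact: rowsP_erow.
move=> i mi l; rewrite setrowE; case: (eqVneq i i0) => ne.
  by rewrite /erow eq_sym.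
apply: Hxs; rewrite ltn_neqAle mi andbT; apply: contra ne => /eqP e.
by apply/eqP; apply: val_inj; rewrite /= e.
Qed.
End RowAff.

Section Tup.
Variables (R : realType) (n k : nat).
Notation M := 'M[R]_(n, k).
Implicit Types (s t : 'I_n -> option 'I_k) (S : ktuple n k).

Lemma eqSome (T : eqType) (a b : T) : (Some a == Some b) = (a == b).
Proof. by []. Qed.
Lemma eqNoneSome (T : eqType) (b : T) : (None == Some b) = false.
Proof. by []. Qed.
Lemma eqSomeNone (T : eqType) (b : T) : (Some b == None) = false.
Proof. by []. Qed.

Definition tup s : ktuple n k := [ffun l => [set i | s i == Some l]].
Definition slot S (i : 'I_n) : option 'I_k := [pick j | i \in S j].
Definition meetv s t i := if s i == t i then s i else None.
Definition joinv s t i : option 'I_k :=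
  match s i, t i with
  | None, b => b
  | a, None => a
  | Some a, Some b => if a == b then Some a else None
  end.

Lemma kdisjP S i j l : kdisj S -> i \in S j -> i \in S l -> j = l.
Proof.
move=> /forallP /(_ j) /forallP /(_ l) H ij il; apply/eqP; apply: contraT => ne.
by move: H; rewrite ne /= => /disjointFr /(_ ij); rewrite il.
Qed.

Lemma tup_kdisj s : kdisj (tup s).
Proof.
apply/forallP=> j; apply/forallP=> l; apply/implyP=> ne.
rewrite finset.disjoints_subset; apply/fintype.subsetP => i; rewrite !ffunE !inE => /eqP ->.
by apply: contra ne => /eqP [->].
Qed.

Lemma tup_ext s t : s =1 t -> tup s = tup t.
Proof. by move=> e; apply/ffunP=> l; apply/setP=> i; rewrite !ffunE !inE e. Qed.

Lemma slot_tup s i : slot (tup s) i = s i.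
Proof.
rewrite /slot; case: pickP => [j|].
  by rewrite ffunE inE => /eqP.
case E: (s i) => [a|] // /(_ a); by rewrite ffunE inE E eqxx.
Qed.

Lemma tup_slot S : kdisj S -> tup (slot S) = S.
Proof.
move=> HS; apply/ffunP=> l; apply/setP=> i; rewrite ffunE inE /slot.
case: pickP => [j Hj|Hn].
  apply/eqP/idP => [[<-] //|Hl]; congr Some; exact: kdisjP HS Hj Hl.
by rewrite Hn.
Qed.

Lemma kmeet_tup s t : kmeet (tup s) (tup t) = tup (meetv s t).
Proof.
apply/ffunP=> l; apply/setP=> i; rewrite !ffunE !inE /meetv.
case: (s i) => [a|]; case: (t i) => [b|] //=; rewrite ?andbF //.
rewrite !eqSome; case: (eqVneq a b) => [->|ne]; rewrite ?andbb ?eqSome //.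
apply/negbTE/andP => -[/eqP ea /eqP eb]; by move: ne; rewrite ea eb eqxx.
Qed.

Lemma kjoin_tup s t : kjoin (tup s) (tup t) = tup (joinv s t).
Proof.
apply/ffunP=> l; apply/setP=> i; rewrite !ffunE finset.in_setD.
have -> : (i \in \bigcup_(l' | l' != l) (tup s l' :|: tup t l')) =
   ((s i != None) && (s i != Some l)) || ((t i != None) && (t i != Some l)).
  apply/finset.bigcupP/idP => [[l' nl']|].
    rewrite finset.in_setU !ffunE !inE => /orP [] /eqP ->; rewrite ?orbT //=.
    by rewrite /= ?eqSome nl'. by rewrite /= ?eqSome nl' ?orbT.
  case Es: (s i) => [a|]; case Et: (t i) => [b|]; rewrite /= ?eqSome ?orbF ?andbF //= => H.
  - case/orP: H => H; [exists a | exists b];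
      by rewrite // finset.in_setU !ffunE !inE ?Es ?Et ?eqxx ?orbT.
  - by exists a; rewrite // finset.in_setU !ffunE !inE ?Es ?Et ?eqxx ?orbT.
  - by exists b; rewrite // finset.in_setU !ffunE !inE ?Es ?Et ?eqxx ?orbT.
rewrite finset.in_setU !inE /joinv.
case: (s i) => [a|]; case: (t i) => [b|];
  rewrite /= ?eqSome ?eqSomeNone ?eqNoneSome ?andbF ?orbF ?andbT /=.
- case: (eqVneq a l) => [al|al]; case: (eqVneq b l) => [bl|bl]; subst; rewrite ?eqxx //=.
  + by rewrite [l == b]eq_sym (negPf bl).
  + by rewrite (negPf al).
  + by case: ifP => // _; rewrite eqSome (negPf al).
- by rewrite negbK andbb.
- by rewrite negbK andbb.
- by [].
Qed.

Variable f : ktuple n k -> R.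
Hypothesis fsub : k_submodular f.

Lemma ksub s t : f (tup (meetv s t)) + f (tup (joinv s t)) <= f (tup s) + f (tup t).
Proof. rewrite -kmeet_tup -kjoin_tup; apply: fsub; exact: tup_kdisj. Qed.

End Tup.

Section ML.
Variables (R : realType) (n k : nat).
Notation M := 'M[R]_(n, k).
Variable f : ktuple n k -> R.
Implicit Types (s t : 'I_n -> option 'I_k) (S : ktuple n k).

Definition g S i (r : 'I_k -> R) : R :=
  (\prod_(j < k) (if i \in S j then r j else 1)) *
  (if i \in \bigcup_(j < k) S j then 1 else 1 - \sum_j r j).

Lemma g_ext S i r r' : r =1 r' -> g S i r = g S i r'.
Proof.
move=> e; rewrite /g; congr (_ * _).
  by apply: eq_bigr => j _; rewrite e.
by rewrite (eq_bigr _ (fun j _ => e j)).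
Qed.

Lemma w_prod S (x : M) :
  (\prod_(j < k) \prod_(i in S j) x i j) *
    \prod_(i in ~: \bigcup_(j < k) S j) (1 - \sum_(j < k) x i j)
  = \prod_i g S i (fun j => x i j).
Proof.
have E1 : \prod_(j < k) \prod_(i in S j) x i j =
          \prod_i \prod_(j < k) (if i \in S j then x i j else 1).
  rewrite (eq_bigr (fun j => \prod_i (if i \in S j then x i j else 1))).
    by rewrite exchange_big.
  by move=> j _; rewrite big_mkcond.
have E2 : \prod_(i in ~: \bigcup_(j < k) S j) (1 - \sum_(j < k) x i j) =
   \prod_i (if i \in \bigcup_(j < k) S j then 1 else 1 - \sum_(j < k) x i j).
  rewrite big_mkcond; apply: eq_bigr => i _; rewrite finset.in_setC.
  by case: (i \in _).
by rewrite E1 E2 -big_split.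
Qed.

Lemma g_slot S i r : kdisj S ->
  g S i r = if slot S i is Some j then r j else 1 - \sum_j r j.
Proof.
move=> HS; rewrite /g /slot; case: pickP => [j0 Hj0|Hn].
  have -> : i \in \bigcup_(j < k) S j by apply/finset.bigcupP; exists j0.
  rewrite mulr1 (bigD1 j0) //= Hj0 big1 ?mulr1 // => j nj.
  case: ifP => // Hj; have e := kdisjP HS Hj0 Hj.
  by move: nj; rewrite e eqxx.
have -> : (i \in \bigcup_(j < k) S j) = false.
  by apply/negbTE/finset.bigcupP => -[j _]; rewrite Hn.
by rewrite big1 ?mul1r // => j _; rewrite Hn.
Qed.

Lemma sum_opt (o : option 'I_k) : \sum_j ((o == Some j)%:R : R) = (o != None)%:R.
Proof.
case: o => [a|]; last by rewrite big1.
rewrite (bigD1 a) //= eqSome eqxx big1 ?addr0 // => j nj.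
by rewrite eqSome eq_sym (negPf nj).
Qed.

Definition raffr (h : ('I_k -> R) -> R) :=
  forall u, h u = h (@zrow R k) + \sum_j u j * (h (erow R j) - h (@zrow R k)).

Lemma g_raff S i : kdisj S -> raffr (g S i).
Proof.
move=> HS u; have gE := fun r => @g_slot S i r HS.
case E: (slot S i) => [j0|].
  have gE' : forall r, g S i r = r j0 by move=> r; rewrite gE E.
  rewrite (eq_bigr (fun j => u j * (erow R j j0 - zrow R j0))); last first.
    by move=> j _; rewrite !gE'.
  rewrite !gE' /zrow add0r; under eq_bigr do rewrite subr0.
  rewrite (bigD1 j0) //= /erow eqxx mulr1 big1 ?addr0 // => j nj.
  by rewrite eq_sym (negPf nj) mulr0.
have gE' : forall r, g S i r = 1 - \sum_j r j by move=> r; rewrite gE E.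
rewrite (eq_bigr (fun j => u j * (-1))); last first.
  by move=> j _; rewrite !gE' sum_erow /zrow big1_eq subrr subr0 sub0r.
rewrite !gE' /zrow big1_eq subr0; under eq_bigr do rewrite mulrN1.
by rewrite sumrN.
Qed.

Lemma rowaff_of (G : M -> R) :
  (forall z i, exists h Q, raffr h /\ forall u, G (setrow z i u) = h u * Q) ->
  rowaff G.
Proof.
move=> H z i u; case: (H z i) => h [Q [Hh HG]].
rewrite /DG !HG (Hh u) mulrDl mulr_suml; congr (_ + _); apply: eq_bigr => j _.
by rewrite HG -mulrBl mulrA.
Qed.

Definition term S (x : M) := f S * \prod_i g S i (fun j => x i j).

Lemma rowaff_term S : kdisj S -> rowaff (term S).
Proof.
move=> HS; apply: rowaff_of => z i.
exists (g S i), (f S * \prod_(i' | i' != i) g S i' (fun j => z i' j)).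
split; first exact: g_raff.
move=> u; rewrite /term (bigD1 i) //=.
rewrite (@g_ext S i _ u); last by move=> j; rewrite setrowE eqxx.
rewrite (eq_bigr (fun i' => g S i' (fun j => z i' j))); first by rewrite mulrCA.
by move=> i' ni'; apply: g_ext => j; rewrite setrowE (negPf ni').
Qed.

Lemma rowaff_sum (I : finType) (P : pred I) (G : I -> M -> R) :
  (forall a, P a -> rowaff (G a)) -> rowaff (fun x => \sum_(a | P a) G a x).
Proof.
move=> H z i u /=.
rewrite (eq_bigr _ (fun a Pa => H a Pa z i u)) big_split /=; congr (_ + _).
rewrite exchange_big /=; apply: eq_bigr => j _.
by rewrite /DG -sumrB mulr_sumr.
Qed.

Lemma F_term (x : M) : multilinext f x = \sum_(S | kdisj S) term S x.
Proof. by apply: eq_bigr => S _; rewrite /term -mulrA w_prod. Qed.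

Lemma rowaff_F : rowaff (multilinext f).
Proof.
have -> : multilinext f = (fun x => \sum_(S | kdisj S) term S x).
  by apply: funext => x; exact: F_term.
exact: rowaff_sum rowaff_term.
Qed.

Lemma g_pt S i s : kdisj S -> g S i (fun j => ptv R s i j) = (slot S i == s i)%:R.
Proof.
move=> HS; rewrite g_slot //; case: (slot S i) => [j0|].
  by rewrite mxE eq_sym.
under eq_bigr do rewrite mxE.
by rewrite sum_opt; case: (s i) => [a|] /=; rewrite ?mulr1n ?mulr0n ?subrr ?subr0.
Qed.

Lemma prod_ind (P : pred 'I_n) : \prod_i ((P i)%:R : R) = ([forall i, P i])%:R.
Proof.
case: (pickP (fun i => ~~ P i)) => [i Hi|Hn].
  rewrite (bigD1 i) //= (negPf Hi) mul0r.
  suff -> : [forall i, P i] = false by [].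
  by apply/negbTE/forallP => /(_ i); rewrite (negPf Hi).
have -> : [forall i, P i] by apply/forallP => i; move: (Hn i) => /= /negbFE.
by rewrite big1 // => i _; move: (Hn i) => /= /negbFE ->.
Qed.

Lemma F_pt s : multilinext f (ptv R s) = f (tup s).
Proof.
rewrite F_term (bigD1 (tup s)) ?tup_kdisj //= big1 ?addr0.
  rewrite /term (eq_bigr (fun i => 1)) ?big1_eq ?mulr1 // => i _.
  by rewrite g_pt ?tup_kdisj // slot_tup eqxx.
move=> S /andP [HS nS]; rewrite /term (eq_bigr (fun i => ((slot S i == s i))%:R)).
  rewrite prod_ind; case: forallP => [H|_]; last by rewrite mulr0.
  move: nS; rewrite -(tup_slot HS) (tup_ext (t := s)) ?eqxx // => i.
  exact/eqP/H.
by move=> i _; rewrite g_pt.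
Qed.

Lemma rowsP_le1 (x : M) i j : rowsP x -> x i j <= 1.
Proof.
move=> /(_ i) [H0 H1]; apply: le_trans H1.
by rewrite (bigD1 j) //= lerDl sumr_ge0.
Qed.

Lemma g_bound S i (x : M) : kdisj S -> rowsP x ->
  0 <= g S i (fun j => x i j) <= 1.
Proof.
move=> HS Hx; rewrite g_slot //; case: (slot S i) => [j|].
  by rewrite rowsP_le1 // andbT; case: (Hx i).
case: (Hx i) => H0 H1; rewrite subr_ge0 H1 /= lerBlDr lerDl.
exact: sumr_ge0.
Qed.

Hypothesis f0 : forall S, kdisj S -> 0 <= f S.

Definition Mf := \sum_(S | kdisj S) f S.

Lemma F_bound (x : M) : rowsP x -> 0 <= multilinext f x <= Mf.
Proof.
move=> Hx; rewrite F_term; apply/andP; split.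
  apply: sumr_ge0 => S HS; apply: mulr_ge0; first exact: f0.
  by apply: prodr_ge0 => i _; case/andP: (g_bound i HS Hx).
apply: ler_sum => S HS; rewrite /term -[leRHS]mulr1; apply: ler_wpM2l; first exact: f0.
by apply: prodr_ile1 => i _; exact: g_bound.
Qed.

End ML.

Section Props.
Variables (R : realType) (n k : nat).
Notation M := 'M[R]_(n, k).
Variable f : ktuple n k -> R.
Hypothesis fsub : k_submodular f.
Notation F := (multilinext f).
Implicit Types (s t : 'I_n -> option 'I_k).

Lemma rowaff_add (G1 G2 : M -> R) : rowaff G1 -> rowaff G2 ->
  rowaff (fun z => G1 z + G2 z).
Proof.
move=> H1 H2 z i u /=; rewrite (H1 z i u) (H2 z i u) addrACA -big_split /=.
congr (_ + _); apply: eq_bigr => j _; rewrite /DG; ring.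
Qed.

Lemma rowaff_opp (G : M -> R) : rowaff G -> rowaff (fun z => - G z).
Proof.
move=> H z i u /=; rewrite (H z i u) opprD -sumrN; congr (_ + _).
apply: eq_bigr => j _; rewrite /DG; ring.
Qed.

Definition upd s i (o : option 'I_k) := fun i' => if i' == i then o else s i'.

Lemma setrow_pt s i o :
  setrow (ptv R s) i (fun l => (o == Some l)%:R) = ptv R (upd s i o).
Proof. by apply/matrixP=> a b; rewrite !mxE /upd; case: (a == i). Qed.

Lemma erowE (j : 'I_k) : erow R j = (fun l => (Some j == Some l)%:R).
Proof. by apply: funext => l; rewrite /erow eqSome eq_sym. Qed.

Lemma zrowE : @zrow R k = (fun l => ((None : option 'I_k) == Some l)%:R).
Proof. by []. Qed.

Lemma DG_pt i j s :
  DG F i j (ptv R s) = f (tup (upd s i (Some j))) - f (tup (upd s i None)).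
Proof. by rewrite /DG erowE zrowE !setrow_pt !F_pt. Qed.

Lemma pairwise_pt i j j' s : j != j' ->
  0 <= DG F i j (ptv R s) + DG F i j' (ptv R s).
Proof.
move=> njj; rewrite !DG_pt.
have := ksub fsub (upd s i (Some j)) (upd s i (Some j')).
rewrite (@tup_ext n k (meetv _ _) (upd s i None)); last first.
  move=> x; rewrite /meetv /upd; case: (x == i); rewrite ?eqxx //.
  by rewrite eqSome (negPf njj).
rewrite (@tup_ext n k (joinv _ _) (upd s i None)); last first.
  move=> x; rewrite /joinv /upd; case: (x == i); first by rewrite (negPf njj).
  by case: (s x) => // a; rewrite eqxx.
move=> H; lra.
Qed.

Lemma pairwise i j j' (z : M) : j != j' -> rowsP z -> 0 <= DG F i j z + DG F i j' z.
Proof.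
move=> njj; apply: (convex_ext (H := fun z => DG F i j z + DG F i j' z)).
  by apply: rowaff_add; apply: rowaff_D; exact: rowaff_F.
by move=> s; exact: pairwise_pt.
Qed.

Lemma orthant_pt i j r l s : DG (DG F i j) r l (ptv R s) <= 0.
Proof.
case: (eqVneq r i) => [->|nri].
  by rewrite [DG (DG _ _ _) _ _ _]/DG !DG_setrow subrr.
rewrite [DG (DG _ _ _) _ _ _]/DG erowE zrowE !setrow_pt !DG_pt.
have := ksub fsub (upd (upd s r None) i (Some j)) (upd (upd s r (Some l)) i None).
rewrite (@tup_ext n k (meetv _ _) (upd (upd s r None) i None)); last first.
  move=> x; rewrite /meetv /upd; case: (x == i) => //; case: (x == r) => //.
  by rewrite eqxx.
rewrite (@tup_ext n k (joinv _ _) (upd (upd s r (Some l)) i (Some j))); last first.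
  move=> x; rewrite /joinv /upd; case: (x == i) => //; case: (x == r) => //.
  by case: (s x) => // a; rewrite eqxx.
move=> H; lra.
Qed.

Lemma orthant i j r l (z : M) : rowsP z -> DG (DG F i j) r l z <= 0.
Proof.
move=> Hz; rewrite -oppr_ge0.
apply: (convex_ext (H := fun z => - DG (DG F i j) r l z)) => //.
  by apply: rowaff_opp; do 2 apply: rowaff_D; exact: rowaff_F.
by move=> s; rewrite oppr_ge0; exact: orthant_pt.
Qed.

Lemma rowsP_mix (x x' : M) r : rowsP x -> rowsP x' -> rowsP (mix x x' r).
Proof.
move=> Hx Hx' i; split.
  by move=> j; rewrite mxE; case: ifP => _; [case: (Hx' i)|case: (Hx i)].
under eq_bigr => j _ do rewrite mxE.
by case: (i < r)%N; [case: (Hx' i)|case: (Hx i)].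
Qed.

Lemma DG_mono i j (x y : M) : rowsP x -> rowsP y -> (forall a b, x a b <= y a b) ->
  DG F i j y <= DG F i j x.
Proof.
move=> Hx Hy Hxy; rewrite -subr_le0 (telescope x y (rowaff_D i j (@rowaff_F R n k f))).
apply: sumr_le0 => r _; apply: sumr_le0 => l _.
rewrite mulr_ge0_le0 // ?subr_ge0 //; apply: orthant; exact: rowsP_mix.
Qed.

End Props.

Lemma dlin (R : realType) (a b : R) : derive1 (fun t : R => a + t * b) 0 = b.
Proof.
have -> : (fun t : R => a + t * b) = cst a + b \*: (@id R).
  by apply: funext => t /=; rewrite mulrC.
rewrite derive1E.
have H : is_derive (0:R) 1 (cst a + b \*: (@id R)) (0 + b *: (1:R^o)).
  exact: is_deriveD.
rewrite (@derive_val _ _ _ _ _ _ _ H).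
by rewrite add0r /GRing.scale /= mulr1.
Qed.

Section Err.
Variables (R : realType) (n k : nat).
Notation M := 'M[R]_(n, k).

Definition nd (x x' : M) := \sum_a \sum_b `|x' a b - x a b|.
Definition bnd (G : M -> R) B := forall x, rowsP x -> `|G x| <= B.

Lemma nd_ge0 x x' : 0 <= nd x x'.
Proof. by apply: sumr_ge0 => a _; apply: sumr_ge0 => b _. Qed.

Lemma nd_mono (x x' y y' : M) :
  (forall a b, `|y' a b - y a b| <= `|x' a b - x a b|) -> nd y y' <= nd x x'.
Proof. by move=> H; apply: ler_sum => a _; apply: ler_sum => b _. Qed.

Lemma nd_const (x x' : M) d :
  (forall a b, `|x' a b - x a b| <= d) -> nd x x' <= (k * n)%:R * d.
Proof.
move=> H; apply: le_trans (_ : \sum_(a < n) \sum_(b < k) d <= _).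
  by apply: ler_sum => a _; apply: ler_sum => b _.
by rewrite !sumr_const !card_ord -mulrnA mulr_natl.
Qed.

Lemma DG_bound G B r j z : bnd G B -> rowsP z -> `|DG G r j z| <= B + B.
Proof.
move=> HB Hz; rewrite /DG; apply: le_trans (ler_normB _ _) _.
by apply: lerD; apply: HB; [apply: rowsP_erow|apply: rowsP_zrow].
Qed.

Lemma lip G B (x x' : M) : rowaff G -> bnd G B -> rowsP x -> rowsP x' ->
  `|G x' - G x| <= (B + B) * nd x x'.
Proof.
move=> HG HB Hx Hx'; rewrite (telescope x x' HG).
apply: le_trans (ler_norm_sum _ _ _) _; rewrite /nd mulr_sumr; apply: ler_sum => r _.
apply: le_trans (ler_norm_sum _ _ _) _; rewrite mulr_sumr; apply: ler_sum => j _.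
rewrite normrM mulrC; apply: (ler_wpM2r (normr_ge0 _)).
apply: DG_bound HB _; exact: rowsP_mix.
Qed.

Lemma nd_setrow (x x' : M) r w :
  nd (setrow x r w) (setrow (mix x x' r) r w) <= nd x x'.
Proof.
apply: nd_mono => a b; rewrite !setrowE; case: (a == r); first by rewrite subrr normr0.
by rewrite mxE; case: ifP; rewrite ?subrr ?normr0.
Qed.

Lemma taylor G B (x x' : M) : rowaff G -> bnd G B -> rowsP x -> rowsP x' ->
  `|G x' - G x - \sum_r \sum_j (x' r j - x r j) * DG G r j x|
     <= ((B + B) + (B + B)) * nd x x' * nd x x'.
Proof.
move=> HG HB Hx Hx'.
have key : forall r j, `|DG G r j (mix x x' r) - DG G r j x| <= ((B + B) + (B + B)) * nd x x'.
  move=> r j; rewrite /DG.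
  have -> : forall a1 a2 b1 b2 : R, a1 - a2 - (b1 - b2) = (a1 - b1) - (a2 - b2)
    by move=> *; ring.
  have B0 : 0 <= B + B by apply: addr_ge0; apply: le_trans (HB _ Hx).
  have Hm := rowsP_mix r Hx Hx'.
  apply: le_trans (ler_normB _ _) _; rewrite mulrDl; apply: lerD.
    apply: le_trans (lip HG HB (rowsP_erow _ _ Hx) (rowsP_erow _ _ Hm)) _.
    exact: (ler_wpM2l B0 (nd_setrow _ _ _ _)).
  apply: le_trans (lip HG HB (rowsP_zrow _ Hx) (rowsP_zrow _ Hm)) _.
  exact: (ler_wpM2l B0 (nd_setrow _ _ _ _)).
rewrite (telescope x x' HG) -sumrB.
apply: le_trans (ler_norm_sum _ _ _) _.
rewrite [X in _ <= X]mulrC /nd mulr_suml; apply: ler_sum => r _.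
rewrite -sumrB; apply: le_trans (ler_norm_sum _ _ _) _.
rewrite mulr_suml; apply: ler_sum => j _.
rewrite -mulrBr normrM [X in _ <= X]mulrC.
apply: le_trans (ler_wpM2l (normr_ge0 _) (key r j)) _.
by rewrite (mulrC `|x' r j - x r j|).
Qed.

Variable f : ktuple n k -> R.
Notation F := (multilinext f).

Lemma partialF_DG (x : M) i j : partialF F x i j = DG F i j x.
Proof.
rewrite /partialF.
have -> : (fun t => F (x + t *: delta_mx i j)) = (fun t => F x + t * DG F i j x).
  apply: funext => t.
  have -> : x + t *: delta_mx i j = setrow x i (fun l => x i l + t * (l == j)%:R).
    apply/matrixP => a b; rewrite !mxE; case: (eqVneq a i) => [->|nai] /=.
      by [].
    by rewrite mulr0 addr0.
  rewrite (@rowaff_F R n k f) (rowaff_val x i (@rowaff_F R n k f)) -addrA; congr (_ + _).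
  rewrite (eq_bigr (fun l => x i l * DG F i l x + (t * (l == j)%:R) * DG F i l x)).
    rewrite big_split /=; congr (_ + _).
    rewrite (bigD1 j) //= eqxx mulr1 big1 ?addr0 // => l /negPf ->.
    by rewrite mulr0 mul0r.
  by move=> l _; rewrite mulrDl.
exact: dlin.
Qed.

End Err.

Lemma exmax (R : realType) k (g : 'I_k -> R) (j0 : 'I_k) : exists j, forall l, g l <= g j.
Proof.
case: (@arg_maxP _ R 'I_k j0 xpredT g isT) => j _ H; exists j => l; exact: H l isT.
Qed.

Lemma bool01 (R : realType) (b : bool) : 0 <= (b%:R : R) <= 1.
Proof. by case: b; rewrite /= ?mulr1n ?mulr0n ler01 lexx. Qed.

Section Step.
Variables (R : realType) (n k : nat).
Notation M := 'M[R]_(n, k).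
Variable f : ktuple n k -> R.
Hypothesis f0 : forall S, kdisj S -> 0 <= f S.
Hypothesis fsub : k_submodular f.
Hypothesis k2 : (2 <= k)%N.
Notation Fm := (multilinext f).
Notation Bf := (Mf f).
Notation K := ((k * n)%:R : R).
Notation C := ((Bf + Bf) + (Bf + Bf)).

Lemma bndF : bnd Fm Bf.
Proof.
move=> x Hx; have /andP [H0 H1] := F_bound f0 Hx; by rewrite ger0_norm.
Qed.

Lemma rowsP_pt (s : 'I_n -> option 'I_k) : rowsP (ptv R s).
Proof.
move=> i; split; first by move=> j; rewrite mxE; case/andP: (bool01 R (s i == Some j)).
under eq_bigr do rewrite mxE.
by rewrite sum_opt; case/andP: (bool01 R (s i != None)).
Qed.

Lemma step (x x' o o' v : M) (s : 'I_n -> option 'I_k) (d c : R) :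
  0 < d -> 0 <= c -> rowsP x -> rowsP x' -> rowsP o -> rowsP o' ->
  x' = x + d *: v -> o' = o + d *: (v - ptv R s) ->
  (forall a b, x a b <= o a b) ->
  is_direction v -> good_direction c (\matrix_(i, j) DG Fm i j x) v ->
  Fm o - Fm o' <= c * (Fm x' - Fm x + C * (K * d) * (K * d)) + C * (K * d) * (K * d).
Proof.
move=> d0 c0 Hx Hx' Ho Ho' Ex' Eo' Hxo [Hv1 Hv2] Hg.
have B0 : 0 <= Bf by apply: le_trans (bndF Hx).
have C0 : 0 <= C by rewrite !addr_ge0.
have K0 : 0 <= K by rewrite ler0n.
have Kd0 : 0 <= K * d by rewrite mulr_ge0 // ltW.
have sq : forall z z' : M, nd z z' <= K * d ->
    C * nd z z' * nd z z' <= C * (K * d) * (K * d).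
  move=> z z' H; have H2 : nd z z' * nd z z' <= (K * d) * (K * d) by apply: ler_pM; rewrite ?nd_ge0.
  rewrite -mulrA -(mulrA C); exact: (ler_wpM2l C0 H2).
have nd1 : nd x x' <= K * d.
  apply: nd_const => a b; rewrite Ex' !mxE addrAC subrr add0r.
  case/andP: (Hv1 a b) => v0 v1.
  rewrite ger0_norm ?mulr_ge0 ?(ltW d0) // -[leRHS]mulr1.
  by apply: ler_wpM2l => //; apply: ltW.
have nd2 : nd o o' <= K * d.
  apply: nd_const => a b; rewrite Eo' !mxE addrAC subrr add0r.
  case/andP: (Hv1 a b) => v0 v1.
  have /andP [p0 p1] := bool01 R (s a == Some b).
  rewrite normrM ger0_norm ?(ltW d0) // -[leRHS]mulr1.
  apply: ler_wpM2l; first exact: ltW.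
  rewrite ler_norml; apply/andP; split; lra.
have TA := taylor (@rowaff_F R n k f) bndF Hx Hx'.
rewrite ler_norml in TA; case/andP: TA => TA _.
have TB := taylor (@rowaff_F R n k f) bndF Ho Ho'.
rewrite ler_norml in TB; case/andP: TB => TB _.
have sA := sq _ _ nd1; have sB := sq _ _ nd2.
pose Y := \sum_i \sum_j v i j * DG Fm i j x.
pose Q := \sum_i \sum_j (v i j - ptv R s i j) * DG Fm i j o.
have SA : \sum_r \sum_j (x' r j - x r j) * DG Fm r j x = d * Y.
  rewrite /Y mulr_sumr; apply: eq_bigr => r _; rewrite mulr_sumr; apply: eq_bigr => j _.
  by rewrite Ex' !mxE addrAC subrr add0r mulrA.
have SB : \sum_r \sum_j (o' r j - o r j) * DG Fm r j o = d * Q.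
  rewrite /Q mulr_sumr; apply: eq_bigr => r _; rewrite mulr_sumr; apply: eq_bigr => j _.
  by rewrite Eo' !mxE addrAC subrr add0r mulrA.
rewrite SA in TA; rewrite SB in TB.
have key : - Q <= c * Y.
  have lt0k : (0 < k)%N by apply: leq_trans k2.
  pose j0 := Ordinal lt0k; pose j1 := Ordinal k2.
  have nj : j1 != j0 by [].
  pose b i j := DG Fm i j o.
  have [js Hjs] := fin_all_exists (fun i => exmax (fun j => b i j) j0).
  have Hgd := Hg (\matrix_(i, j) b i j).
  have E1 : forall i (j j' : 'I_k), j != j' ->
      0 <= (\matrix_(i, j) b i j) i j + (\matrix_(i, j) b i j) i j'.
    by move=> i j j' njj; rewrite !mxE; apply: pairwise.
  have E2 : forall i j, (\matrix_(i, j) b i j) i j <= (\matrix_(i, j) DG Fm i j x) i j.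
    by move=> i j; rewrite !mxE; apply: DG_mono.
  have {Hgd E1 E2} Hgd := Hgd E1 E2 js.
  have EY : \sum_i \sum_j v i j * (\matrix_(i, j) DG Fm i j x) i j = Y.
    by apply: eq_bigr => i _; apply: eq_bigr => j _; rewrite mxE.
  have Eb : \sum_i \sum_j v i j *
       ((\matrix_(i, j) b i j) i (js i) - (\matrix_(i, j) b i j) i j) =
      \sum_i \sum_j v i j * (b i (js i) - b i j).
    by apply: eq_bigr => i _; apply: eq_bigr => j _; rewrite !mxE.
  rewrite EY Eb in Hgd; apply: le_trans Hgd.
  rewrite /Q -sumrN; apply: ler_sum => i _.
  rewrite -sumrN.
  rewrite (eq_bigr (fun j => ptv R s i j * b i j - v i j * b i j)); last first.
    by move=> j _; rewrite -mulNr opprB mulrBl.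
  rewrite [X in _ <= X](eq_bigr (fun j => v i j * b i (js i) - v i j * b i j)); last first.
    by move=> j _; rewrite mulrBr.
  rewrite !sumrB -mulr_suml Hv2 mul1r lerD2r.
  have bm0 : 0 <= b i (js i).
    have := pairwise fsub i nj (Ho); rewrite -/(b i j1) -/(b i j0).
    have := Hjs i j0; have := Hjs i j1; move=> h1 h2 h3; lra.
  apply: le_trans (_ : \sum_j ptv R s i j * b i (js i) <= _).
    apply: ler_sum => j _; apply: ler_wpM2l; last exact: Hjs.
    by case: (rowsP_pt s i) => H _; apply: H.
  rewrite -mulr_suml -[leRHS]mul1r; apply: ler_wpM2r => //.
  by case: (rowsP_pt s i).
have dk := ler_wpM2l (ltW d0) key.
have cA : c * (d * Y) <= c * (Fm x' - Fm x + C * (K * d) * (K * d)).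
  by apply: ler_wpM2l => //; lra.
have E : d * (c * Y) = c * (d * Y) by rewrite mulrCA.
rewrite E mulrN in dk.
lra.
Qed.
End Step.

Unset Implicit Arguments.
Unset Strict Implicit.

Theorem mainTheorem4 (R : realType) (n k : nat) (f : ktuple n k -> R) (c : R) :
  (2 <= k)%N ->
  (forall S, kdisj S -> 0 <= f S) ->
  k_submodular f ->
  0 < c ->
  forall eps : R, 0 < eps ->
  exists N0 : nat, forall N : nat, (N0 <= N)%N ->
  forall v : nat -> 'M[R]_(n, k),
    (forall t : nat, (t < N)%N ->
       is_direction (v t) /\
       good_direction c
         (\matrix_(i, j) partialF (multilinext f) (traj N v t) i j) (v t)) ->
    inP (traj N v N) /\
    (c + 1)^-1 * kOPT f - eps <= multilinext f (traj N v N).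
Proof.
move=> k2 f0 fsub c0 eps eps0.
pose Bf := Mf f; pose K : R := (k * n)%:R; pose C := (Bf + Bf) + (Bf + Bf).
pose C1 := C * K * K.
exists (Num.truncn (C1 / eps)).+1 => N HN v Hv.
have N0 : (0 < N)%N by apply: leq_trans HN.
pose d : R := (N%:R)^-1.
have d0 : 0 < d by rewrite invr_gt0 ltr0n.
have Nd : N%:R * d = 1 by rewrite mulfV // pnatr_eq0 -lt0n.
have trS : forall t, traj N v t.+1 = traj N v t + d *: v t.
  by move=> t; rewrite /traj big_ord_recr.
have tr0 : traj N v 0 = 0 by rewrite /traj big_ord0.
have trP : forall t, (t <= N)%N -> (forall i j, 0 <= traj N v t i j) /\
    (forall i, \sum_j traj N v t i j = t%:R * d).
  elim=> [|t IH] Ht.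
    rewrite tr0; split=> [i j|i]; first by rewrite mxE.
    by rewrite mul0r big1 // => j _; rewrite mxE.
  have [H1 H2] := IH (ltnW Ht); have [[Hv1 Hv2] _] := Hv t Ht.
  rewrite trS; split.
    move=> i j; rewrite !mxE; apply: addr_ge0 (H1 i j) _.
    by apply: mulr_ge0 (ltW d0) _; case/andP: (Hv1 i j).
  move=> i; under eq_bigr do rewrite !mxE.
  rewrite big_split /= H2 -mulr_sumr Hv2 mulr1 -[t.+1]addn1 natrD mulrDl mul1r.
  by [].
have td1 : forall t, (t <= N)%N -> t%:R * d <= 1.
  move=> t Ht; rewrite -[X in _ <= X]Nd; apply: (ler_wpM2r (ltW d0)).
  by rewrite ler_nat.
have trR : forall t, (t <= N)%N -> rowsP (traj N v t).
  move=> t Ht i; have [H1 H2] := trP t Ht; split; first exact: H1.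
  by rewrite H2 td1.
have [S HS HOPT] : exists2 S, kdisj S & kOPT f <= f S.
  rewrite /kOPT; apply: (big_ind (fun x => exists2 S, kdisj S & x <= f S)).
  - by exists (tup (fun _ => None)); [exact: tup_kdisj | exact: f0 (tup_kdisj _)].
  - move=> x y [S1 H1 h1] [S2 H2 h2]; case: (leP x y) => hxy.
      by exists S2.
    by exists S1.
  - by move=> S' HS'; exists S'.
pose sg := slot S; pose O := ptv R sg.
have FO : multilinext f O = f S by rewrite F_pt tup_slot.
have OR := (@rowsP_pt R n k sg).
pose o t := traj N v t + (1 - t%:R * d) *: O.
have oR : forall t, (t <= N)%N -> rowsP (o t).
  move=> t Ht i; have [H1 H2] := trP t Ht; have [Oa Ob] := OR i.
  have h1 := td1 t Ht.
  split.
    move=> j; rewrite mxE [(_ *: O) _ _]mxE; apply: addr_ge0 (H1 i j) (mulr_ge0 _ (Oa j)).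
    by rewrite subr_ge0.
  under eq_bigr do rewrite mxE [(_ *: O) _ _]mxE.
  rewrite big_split /= H2 -mulr_sumr.
  have : (1 - t%:R * d) * \sum_j O i j <= (1 - t%:R * d) * 1.
    by apply: ler_wpM2l => //; rewrite subr_ge0.
  lra.
have oS : forall t, o t.+1 = o t + d *: (v t - O).
  move=> t; apply/matrixP => a b; rewrite /o trS !mxE -addn1 natrD; ring.
have xo : forall t, (t <= N)%N -> forall a b, traj N v t a b <= o t a b.
  move=> t Ht a b; rewrite /o mxE [(_ *: O) _ _]mxE lerDl; apply: mulr_ge0.
    by rewrite subr_ge0 td1.
  by case: (OR a) => H _; apply: H.
have oN : o N = traj N v N by rewrite /o Nd subrr scale0r addr0.
have o0 : o 0%N = O by rewrite /o tr0 mul0r subr0 scale1r add0r.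
pose e := C * (K * d) * (K * d).
pose phi t := multilinext f (o t) + c * multilinext f (traj N v t).
have stp : forall t, (t < N)%N -> phi t - phi t.+1 <= (c + 1) * e.
  move=> t Ht; have [Hdir Hgd] := Hv t Ht.
  have E : \matrix_(i, j) partialF (multilinext f) (traj N v t) i j =
           \matrix_(i, j) DG (multilinext f) i j (traj N v t).
    by apply/matrixP => i j; rewrite !mxE partialF_DG.
  rewrite E in Hgd.
  have := step f0 fsub k2 d0 (ltW c0) (trR t (ltnW Ht)) (trR t.+1 Ht)
    (oR t (ltnW Ht)) (oR t.+1 Ht) (trS t) (oS t) (xo t (ltnW Ht)) Hdir Hgd.
  rewrite -/e /phi => H; lra.
have acc : forall t, (t <= N)%N -> phi 0%N - phi t <= t%:R * ((c + 1) * e).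
  elim=> [|t IH] Ht; first by rewrite subrr mul0r.
  have := IH (ltnW Ht); have := stp t Ht.
  rewrite -addn1 natrD mulrDl mul1r => h1 h2; lra.
have := acc N (leqnn N).
have -> : N%:R * ((c + 1) * e) = (c + 1) * (C1 * d) * (N%:R * d).
  by rewrite /e /C1; ring.
rewrite Nd mulr1 /phi o0 oN FO => Hfin.
have F0 : 0 <= multilinext f (traj N v 0) by case/andP: (F_bound f0 (trR 0%N isT)).
have C1d : C1 * d <= eps.
  have h : C1 / eps < N%:R.
    apply: lt_le_trans (Num.Theory.truncnS_gt _) _; by rewrite ler_nat.
  rewrite ltr_pdivrMr // in h.
  rewrite -[leRHS]mulr1 -Nd mulrA (mulrC eps); exact: (ler_wpM2r (ltW d0) (ltW h)).
have cF : 0 <= c * multilinext f (traj N v 0) by apply: mulr_ge0 => //; exact: ltW.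
have c1 : 0 < c + 1 by rewrite addr_gt0.
split.
  have [H1 H2] := trP N (leqnn N).
  split; last by move=> i; rewrite H2 Nd.
  by move=> i j; rewrite H1 rowsP_le1 //; exact: trR.
rewrite lerBlDr ler_pdivrMl //.
have : (c + 1) * eps >= (c + 1) * (C1 * d) by apply: ler_wpM2l => //; exact: ltW.
lra.
Qed.
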